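(* Let $(A,B,R)$ be a normalized formal context. Then every join-irreducible element of the lattice $(\mathcal{C}_N,\leq)$ is an atom of $(\mathcal{C}_N,\leq)$.
   Context: A formal context is a triple $(A,B,R)$ with $R\subseteq A\times B$. The necessity operators are $X^{\uparrow_N}=\{a\in A\mid \text{for all } b\in B,\ (a,b)\in R\Rightarrow b\in X\}$ for $X\subseteq B$, and $Y^{\downarrow^N}=\{b\in B\mid \text{for all } a\in A,\ (a,b)\in R\Rightarrow a\in Y\}$ for $Y\subseteq A$. $\mathcal{C}_N=\{(X,Y)\mid X\subseteq B,\ Y\subseteq A,\ X^{\uparrow_N}=Y,\ Y^{\downarrow^N}=X\}$, ordered by $(X_1,Y_1)\leq(X_2,Y_2)$ iff $X_1\subseteq X_2$ (equivalently $Y_1\subseteq Y_2$); it is a complete lattice with join $(X_1\cup X_2,Y_1\cup Y_2)$, meet $(X_1\cap X_2,Y_1\cap Y_2)$ and bottom $(\varnothing,\varnothing)$. The context is normalized if for every $a\in A$ there are $b,b'\in B$ with $(a,b)\in R$, $(a,b')\notin R$, and for every $b\in B$ there are $a,a'\in A$ with $(a,b)\in R$, $(a',b)\notin R$. An element $x$ of a lattice is join-irreducible if $x$ is not the bottom element and $x=y\vee z$ implies $x=y$ or $x=z$; an atom is an element $x$ covering the bottom $\bot$, i.e. $\bot<x$ and no $y$ with $\bot<y<x$. *)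

(* Defs.v *)
Set Implicit Arguments.

Definition subset {T : Type} (X Y : T -> Prop) : Prop := forall t, X t -> Y t.
Definition same_set {T : Type} (X Y : T -> Prop) : Prop := forall t, X t <-> Y t.
Definition setU {T : Type} (X Y : T -> Prop) : T -> Prop := fun t => X t \/ Y t.
Definition set0 {T : Type} : T -> Prop := fun _ => False.

Definition upN {A B : Type} (R : A -> B -> Prop) (X : B -> Prop) : A -> Prop :=
  fun a => forall b, R a b -> X b.
Definition downN {A B : Type} (R : A -> B -> Prop) (Y : A -> Prop) : B -> Prop :=
  fun b => forall a, R a b -> Y a.

Definition inCN {A B : Type} (R : A -> B -> Prop) (X : B -> Prop) (Y : A -> Prop) : Prop :=
  same_set (upN R X) Y /\ same_set (downN R Y) X.

Definition normalized {A B : Type} (R : A -> B -> Prop) : Prop :=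
  (forall a, (exists b, R a b) /\ (exists b', ~ R a b')) /\
  (forall b, (exists a, R a b) /\ (exists a', ~ R a' b)).

Definition leCN {A B : Type} (p q : (B -> Prop) * (A -> Prop)) : Prop :=
  subset (fst p) (fst q).
Definition eqCN {A B : Type} (p q : (B -> Prop) * (A -> Prop)) : Prop :=
  same_set (fst p) (fst q) /\ same_set (snd p) (snd q).
Definition ltCN {A B : Type} (p q : (B -> Prop) * (A -> Prop)) : Prop :=
  leCN p q /\ ~ eqCN p q.
Definition joinCN {A B : Type} (p q : (B -> Prop) * (A -> Prop)) : (B -> Prop) * (A -> Prop) :=
  (setU (fst p) (fst q), setU (snd p) (snd q)).
Definition botCN {A B : Type} : (B -> Prop) * (A -> Prop) := (set0, set0).

Definition in_CN {A B : Type} (R : A -> B -> Prop) (p : (B -> Prop) * (A -> Prop)) : Prop :=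
  inCN R (fst p) (snd p).

Definition join_irreducible {A B : Type} (R : A -> B -> Prop) (x : (B -> Prop) * (A -> Prop)) : Prop :=
  in_CN R x /\ ~ eqCN x botCN /\
  (forall y z, in_CN R y -> in_CN R z -> eqCN x (joinCN y z) -> eqCN x y \/ eqCN x z).

Definition atom {A B : Type} (R : A -> B -> Prop) (x : (B -> Prop) * (A -> Prop)) : Prop :=
  in_CN R x /\ ltCN botCN x /\
  ~ (exists y, in_CN R y /\ ltCN botCN y /\ ltCN y x).

(* Main.v *)
Require Import Defs.
From Stdlib Require Import Classical.

Lemma charY (A B : Type) (R : A -> B -> Prop) X Y :
  normalized R -> inCN R X Y -> forall a, Y a <-> exists b, R a b /\ X b.
Proof.
  intros [HA HB] [H1 H2] a; split.
  - intros Ya. destruct (HA a) as [[b Rab] _]. exists b; split; auto.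
    apply (proj2 (H1 a)) in Ya. apply Ya, Rab.
  - intros [b [Rab Xb]]. apply (proj2 (H2 b)) in Xb. apply Xb, Rab.
Qed.

Lemma charX (A B : Type) (R : A -> B -> Prop) X Y :
  normalized R -> inCN R X Y -> forall b, X b <-> exists a, R a b /\ Y a.
Proof.
  intros [HA HB] [H1 H2] b; split.
  - intros Xb. destruct (HB b) as [[a Rab] _]. exists a; split; auto.
    apply (proj2 (H2 b)) in Xb. apply Xb, Rab.
  - intros [a [Rab Ya]]. apply (proj2 (H1 a)) in Ya. apply Ya, Rab.
Qed.

Theorem mainTheorem2 (A B : Type) (R : A -> B -> Prop) :
  normalized R ->
  forall x : (B -> Prop) * (A -> Prop), join_irreducible R x -> atom R x.
Proof.
  intros HN [X Y] [Hx [Hnb Hji]].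
  split; [exact Hx|]. split.
  { split; [intros t [] | intros [E1 E2]; apply Hnb; split; intro t; [rewrite (E1 t)|rewrite (E2 t)]; tauto]. }
  intros [[X' Y'] [Hy [[_ Hyb] [Hle Hne]]]].
  unfold in_CN in Hx, Hy; simpl in *.
  unfold leCN in Hle; simpl in Hle.
  assert (HcY := @charY A B R X Y HN Hx). assert (HcX := @charX A B R X Y HN Hx).
  assert (HcY' := @charY A B R X' Y' HN Hy). assert (HcX' := @charX A B R X' Y' HN Hy).
  assert (HY'Y : forall a, Y' a -> Y a).
  { intros a Ha. apply HcY. apply HcY' in Ha. destruct Ha as [b [? ?]]; eauto. }
  set (z := (fun b => X b /\ ~ X' b, fun a => Y a /\ ~ Y' a)).
  assert (Hz : in_CN R z).
  { unfold in_CN, inCN, z; simpl; split; intro t; split.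
    - intro H. assert (Yt : Y t).
      { apply (proj1 Hx t). intros b Rb. apply (H b Rb). }
      split; auto. intro Y't. apply HcY' in Y't. destruct Y't as [b [Rb X'b]].
      apply (H b Rb); auto.
    - intros [Yt nY't] b Rb. split.
      + apply (proj2 (proj1 Hx t)) in Yt. apply Yt, Rb.
      + intro X'b. apply nY't. apply HcY'. eauto.
    - intro H. assert (Xt : X t).
      { apply (proj2 Hx t). intros a Ra. apply (H a Ra). }
      split; auto. intro X't. apply HcX' in X't. destruct X't as [a [Ra Y'a]].
      apply (H a Ra); auto.
    - intros [Xt nX't] a Ra. split.
      + apply (proj2 (proj2 Hx t)) in Xt. apply Xt, Ra.
      + intro Y'a. apply nX't. apply HcX'. eauto. }
  assert (Hj : eqCN (X, Y) (joinCN (X', Y') z)).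
  { unfold eqCN, joinCN, z, setU; simpl; split; intro t; split.
    - intro H. destruct (classic (X' t)); auto.
    - intros [H|[H _]]; auto.
    - intro H. destruct (classic (Y' t)); auto.
    - intros [H|[H _]]; auto. }
  destruct (Hji (X', Y') z Hy Hz Hj) as [He|He].
  - apply Hne. destruct He as [E1 E2]; split; intro t; simpl in *;
      [rewrite (E1 t) | rewrite (E2 t)]; tauto.
  - apply Hyb. unfold eqCN, z in *; simpl in *. destruct He as [E1 E2].
    assert (N' : forall b, ~ X' b).
    { intros b Xb. pose proof (Hle b Xb) as Xb2. apply (proj1 (E1 b)) in Xb2. tauto. }
    split; intro t; simpl; unfold set0; split; try tauto.
    + intro H; apply (N' t); auto.
    + intro H. apply HcY' in H. destruct H as [b [_ Hb]]. apply (N' b); auto.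
Qed.
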